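(* Let $D=\{z\in\mathbb C^2:\ |z_2|^2+x_1^2+y_1^4<1\}$ with defining function $\rho$, and fix $\zeta\in bD$. Choose coordinates $w=(w_1,w_2)$, $w_j=u_j+iv_j$, obtained from the standard coordinates of $\mathbb C^2$ by a translation and a unitary linear transformation, such that $\zeta=(0,0)$ and $\frac{\partial\rho}{\partial v_2}(\zeta)=|\nabla\rho(\zeta)|$, $\frac{\partial\rho}{\partial u_1}(\zeta)=\frac{\partial\rho}{\partial v_1}(\zeta)=\frac{\partial\rho}{\partial u_2}(\zeta)=0$, so that near $\zeta$ the boundary $bD$ is a graph $v_2=\Phi(u_1,v_1,u_2)$ with $\Phi$ smooth, $\Phi(0,0,0)=0$, $\nabla\Phi(0,0,0)=0$; regard points $w\in bD$ near $\zeta$ as functions of the parameters $(u_1,v_1,u_2)$. Then, for $\delta>0$ sufficiently small, $$\frac{\partial\Delta}{\partial u_2}(w,z)\neq0\quad\text{whenever } w\in bD,\ |w-\zeta|<\delta,\ \text{and } |z-\zeta|<\delta.$$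
   Context: Here $\rho(w)=|w_2|^2+u_1^2+v_1^4-1$ in the original coordinates, and $\Delta(w,z)=\langle\partial\rho(w),w-z\rangle=\sum_{j=1}^2\frac{\partial\rho}{\partial w_j}(w)(w_j-z_j)$; the derivative $\partial/\partial u_2$ is taken with respect to the graph parameter $u_2$ of $w\in bD$, with $z$ fixed. *)

(* Defs.v *)
From Stdlib Require Import Reals.
From Coquelicot Require Import Coquelicot.
Open Scope R_scope.

Definition C2 := (C * C)%type.

Definition C2sub (w z : C2) : C2 := (Cminus (fst w) (fst z), Cminus (snd w) (snd z)).
Definition C2norm (w : C2) : R := sqrt (Cmod (fst w) ^ 2 + Cmod (snd w) ^ 2).
Definition C2dist (w z : C2) : R := C2norm (C2sub w z).

Definition rho (w : C2) : R :=
  Cmod (snd w) ^ 2 + (fst (fst w)) ^ 2 + (snd (fst w)) ^ 4 - 1.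
Definition inD (w : C2) : Prop := rho w < 0.

Definition bD (w : C2) : Prop :=
  forall e : R, 0 < e ->
    (exists p, C2dist p w < e /\ inD p) /\ (exists p, C2dist p w < e /\ ~ inD p).

Definition pd_x1 (f : C2 -> R) (w : C2) : R :=
  Derive (fun t => f ((t, snd (fst w)), snd w)) (fst (fst w)).
Definition pd_y1 (f : C2 -> R) (w : C2) : R :=
  Derive (fun t => f ((fst (fst w), t), snd w)) (snd (fst w)).
Definition pd_x2 (f : C2 -> R) (w : C2) : R :=
  Derive (fun t => f (fst w, (t, snd (snd w)))) (fst (snd w)).
Definition pd_y2 (f : C2 -> R) (w : C2) : R :=
  Derive (fun t => f (fst w, (fst (snd w), t))) (snd (snd w)).

Definition gradnorm (f : C2 -> R) (w : C2) : R :=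
  sqrt (pd_x1 f w ^ 2 + pd_y1 f w ^ 2 + pd_x2 f w ^ 2 + pd_y2 f w ^ 2).

(** Complex (Wirtinger) derivatives d f / d z_j = (1/2)(d/dx_j - i d/dy_j). *)
Definition dz1 (f : C2 -> R) (w : C2) : C := (/2 * pd_x1 f w, - (/2 * pd_y1 f w)).
Definition dz2 (f : C2 -> R) (w : C2) : C := (/2 * pd_x2 f w, - (/2 * pd_y2 f w)).

(** Delta(w,z) = sum_j d rho/d w_j (w) (w_j - z_j)  (original coordinates). *)
Definition DeltaD (w z : C2) : C :=
  Cplus (Cmult (dz1 rho w) (Cminus (fst w) (fst z)))
        (Cmult (dz2 rho w) (Cminus (snd w) (snd z))).

(** The 2x2 complex matrix U = [[a, b], [c, d]] is unitary (U U^* = I). *)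
Definition is_unitary (a b c d : C) : Prop :=
  Cmod a ^ 2 + Cmod b ^ 2 = 1 /\ Cmod c ^ 2 + Cmod d ^ 2 = 1 /\
  Cplus (Cmult a (Cconj c)) (Cmult b (Cconj d)) = RtoC 0.

(** New coordinates w' = U (w - zeta); inverse map w = zeta + U^* w'. *)
Definition to_orig (zeta : C2) (a b c d : C) (w' : C2) : C2 :=
  (Cplus (fst zeta) (Cplus (Cmult (Cconj a) (fst w')) (Cmult (Cconj c) (snd w'))),
   Cplus (snd zeta) (Cplus (Cmult (Cconj b) (fst w')) (Cmult (Cconj d) (snd w')))).

Definition graph_pt (Phi : R -> R -> R -> R) (u1 v1 u2 : R) : C2 :=
  ((u1, v1), (u2, Phi u1 v1 u2)).

Definition pd1 (F : R -> R -> R -> R) : R -> R -> R -> R :=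
  fun x y z => Derive (fun t => F t y z) x.
Definition pd2 (F : R -> R -> R -> R) : R -> R -> R -> R :=
  fun x y z => Derive (fun t => F x t z) y.
Definition pd3 (F : R -> R -> R -> R) : R -> R -> R -> R :=
  fun x y z => Derive (fun t => F x y t) z.

Definition cont3 (F : R -> R -> R -> R) (x y z : R) : Prop :=
  forall e : R, 0 < e -> exists d : R, 0 < d /\
    forall x' y' z', Rabs (x' - x) < d -> Rabs (y' - y) < d -> Rabs (z' - z) < d ->
      Rabs (F x' y' z' - F x y z) < e.

Fixpoint Ck (k : nat) (U : R -> R -> R -> Prop) (F : R -> R -> R -> R) : Prop :=
  (forall x y z, U x y z -> cont3 F x y z) /\
  match k with
  | O => True
  | S k' =>
      (forall x y z, U x y z ->
         ex_derive (fun t => F t y z) x /\ ex_derive (fun t => F x t z) y /\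
         ex_derive (fun t => F x y t) z) /\
      Ck k' U (pd1 F) /\ Ck k' U (pd2 F) /\ Ck k' U (pd3 F)
  end.

Definition smooth_on (U : R -> R -> R -> Prop) (F : R -> R -> R -> R) : Prop :=
  forall k, Ck k U F.

Definition ball3 (r : R) (x y z : R) : Prop := sqrt (x ^ 2 + y ^ 2 + z ^ 2) < r.

(* Main.v *)
Require Import Defs.
From Stdlib Require Import Reals Lra Psatz.
From Coquelicot Require Import Coquelicot.
Open Scope R_scope.

Lemma Cmod2 (z : C) : Cmod z ^ 2 = fst z ^ 2 + snd z ^ 2.
Proof. unfold Cmod. apply pow2_sqrt. nra. Qed.

Lemma rho_eq (w : C2) : rho w =
  fst (snd w) ^ 2 + snd (snd w) ^ 2 + fst (fst w) ^ 2 + snd (fst w) ^ 4 - 1.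
Proof. unfold rho. rewrite Cmod2. ring. Qed.

Lemma pdx1_rho w : pd_x1 rho w = 2 * fst (fst w).
Proof.
  unfold pd_x1. apply is_derive_unique.
  apply (is_derive_ext (fun t => fst (snd w) ^ 2 + snd (snd w) ^ 2 + t ^ 2 + snd (fst w) ^ 4 - 1)).
  { intro t. rewrite rho_eq. reflexivity. }
  auto_derive; auto; ring.
Qed.
Lemma pdy1_rho w : pd_y1 rho w = 4 * snd (fst w) ^ 3.
Proof.
  unfold pd_y1. apply is_derive_unique.
  apply (is_derive_ext (fun t => fst (snd w) ^ 2 + snd (snd w) ^ 2 + fst (fst w) ^ 2 + t ^ 4 - 1)).
  { intro t. rewrite rho_eq. reflexivity. }
  auto_derive; auto; ring.
Qed.
Lemma pdx2_rho w : pd_x2 rho w = 2 * fst (snd w).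
Proof.
  unfold pd_x2. apply is_derive_unique.
  apply (is_derive_ext (fun t => t ^ 2 + snd (snd w) ^ 2 + fst (fst w) ^ 2 + snd (fst w) ^ 4 - 1)).
  { intro t. rewrite rho_eq. reflexivity. }
  auto_derive; auto; ring.
Qed.
Lemma pdy2_rho w : pd_y2 rho w = 2 * snd (snd w).
Proof.
  unfold pd_y2. apply is_derive_unique.
  apply (is_derive_ext (fun t => fst (snd w) ^ 2 + t ^ 2 + fst (fst w) ^ 2 + snd (fst w) ^ 4 - 1)).
  { intro t. rewrite rho_eq. reflexivity. }
  auto_derive; auto; ring.
Qed.

Definition Dsnd x1 y1 x2 y2 s1 t1 s2 t2 :=
  x1*(y1-t1) - 2*y1^3*(x1-s1) + x2*(y2-t2) - y2*(x2-s2).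
Definition Dfst x1 y1 x2 y2 s1 t1 s2 t2 :=
  x1*(x1-s1) + 2*y1^3*(y1-t1) + x2*(x2-s2) + y2*(y2-t2).

Lemma DeltaD_snd w z : snd (DeltaD w z) =
  Dsnd (fst (fst w)) (snd (fst w)) (fst (snd w)) (snd (snd w))
       (fst (fst z)) (snd (fst z)) (fst (snd z)) (snd (snd z)).
Proof.
  unfold DeltaD, dz1, dz2, Dsnd. rewrite pdx1_rho, pdy1_rho, pdx2_rho, pdy2_rho.
  destruct w as [[x1 y1] [x2 y2]]; destruct z as [[s1 t1] [s2 t2]]. simpl. field.
Qed.
Lemma DeltaD_fst w z : fst (DeltaD w z) =
  Dfst (fst (fst w)) (snd (fst w)) (fst (snd w)) (snd (snd w))
       (fst (fst z)) (snd (fst z)) (fst (snd z)) (snd (snd z)).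
Proof.
  unfold DeltaD, dz1, dz2, Dfst. rewrite pdx1_rho, pdy1_rho, pdx2_rho, pdy2_rho.
  destruct w as [[x1 y1] [x2 y2]]; destruct z as [[s1 t1] [s2 t2]]. simpl. field.
Qed.

Lemma to_orig_comp zeta ar ai br bi cr ci dr di u1 v1 u2 ph :
  let w := to_orig zeta (ar,ai) (br,bi) (cr,ci) (dr,di) ((u1,v1),(u2,ph)) in
  fst (fst w) = fst (fst zeta) + ar*u1 + ai*v1 + cr*u2 + ci*ph /\
  snd (fst w) = snd (fst zeta) + ar*v1 - ai*u1 + cr*ph - ci*u2 /\
  fst (snd w) = fst (snd zeta) + br*u1 + bi*v1 + dr*u2 + di*ph /\
  snd (snd w) = snd (snd zeta) + br*v1 - bi*u1 + dr*ph - di*u2.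
Proof.
  destruct zeta as [[p1 q1] [p2 q2]]. simpl. repeat split; ring.
Qed.

Lemma C2norm_comp w :
  Rabs (fst (fst w)) <= C2norm w /\ Rabs (snd (fst w)) <= C2norm w /\
  Rabs (fst (snd w)) <= C2norm w /\ Rabs (snd (snd w)) <= C2norm w.
Proof.
  unfold C2norm. rewrite !Cmod2.
  destruct w as [[x1 y1] [x2 y2]]; simpl.
  repeat split; rewrite <- sqrt_Rsqr_abs; apply sqrt_le_1_alt; unfold Rsqr; nra.
Qed.

Lemma C2dist_comp w z :
  Rabs (fst (fst w) - fst (fst z)) <= C2dist w z /\ Rabs (snd (fst w) - snd (fst z)) <= C2dist w z /\
  Rabs (fst (snd w) - fst (snd z)) <= C2dist w z /\ Rabs (snd (snd w) - snd (snd z)) <= C2dist w z.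
Proof.
  unfold C2dist. destruct (C2norm_comp (C2sub w z)) as (H1&H2&H3&H4).
  destruct w as [[x1 y1] [x2 y2]]; destruct z as [[s1 t1] [s2 t2]]. simpl in *.
  unfold Rminus. repeat split; assumption.
Qed.
Lemma abs_mul_le a b A B : Rabs a <= A -> Rabs b <= B -> Rabs (a*b) <= A*B.
Proof. intros. rewrite Rabs_mult. apply Rmult_le_compat; auto using Rabs_pos. Qed.

Definition Dform x1 y1 x2 y2 s1 t1 s2 t2 cr ci dr di ph :=
  (cr + ci*ph)*(y1-t1) + x1*(cr*ph - ci) - 6*y1^2*(cr*ph - ci)*(x1-s1) - 2*y1^3*(cr + ci*ph)
  + (dr + di*ph)*(y2-t2) + x2*(dr*ph - di) - (dr*ph - di)*(x2-s2) - y2*(dr + di*ph).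
Lemma abs_le_diff x p e : Rabs (x - p) <= e -> Rabs x <= Rabs p + e.
Proof. intros. replace x with (p + (x - p)) by ring. eapply Rle_trans. apply Rabs_triang. lra. Qed.

Lemma abs_diff2 x y p e : Rabs (x - p) <= e -> Rabs (y - p) <= e -> Rabs (x - y) <= 2*e.
Proof. intros. replace (x - y) with ((x-p) + -(y-p)) by ring. eapply Rle_trans. apply Rabs_triang.
 rewrite Rabs_Ropp. lra. Qed.

Ltac tri_one u v :=
  lazymatch goal with
  | _ : Rabs (u + v) <= Rabs u + Rabs v |- _ => fail
  | _ => pose proof (Rabs_triang u v)
  end.
Ltac tri := repeat (match goal with
  | |- context [Rabs (?u + ?v)] => tri_one u v
  | _ : context [Rabs (?u + ?v)] |- _ => tri_one u v
  end).


Lemma key_bound x1 y1 x2 y2 s1 t1 s2 t2 p1 q1 p2 q2 cr ci dr di ph eta eps :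
  Rabs (x1-p1) <= eta -> Rabs (y1-q1) <= eta -> Rabs (s1-p1) <= eta -> Rabs (t1-q1) <= eta ->
  Rabs (s2-p2) <= eta -> Rabs (t2-q2) <= eta -> 0 <= eta <= 1 -> Rabs ph <= eps -> eps <= 1 ->
  Rabs cr <= 1 -> Rabs ci <= 1 -> Rabs dr <= 1 -> Rabs di <= 1 ->
  let K := 1 + Rabs p1 + Rabs q1 + Rabs p2 + Rabs q2 in
  Rabs (Dform x1 y1 x2 y2 s1 t1 s2 t2 cr ci dr di ph - (- p1*ci - 2*q1^3*cr - p2*di - q2*dr))
   <= 37 * K^3 * (eta + eps).
Proof.
  intros Hx1 Hy1 Hs1 Ht1 Hs2 Ht2 He Hph Heps Hcr Hci Hdr Hdi K.
  assert (Kp1 : Rabs p1 <= K - 1 - Rabs q1 - Rabs p2 - Rabs q2) by (unfold K; lra).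
  pose proof (Rabs_pos p1). pose proof (Rabs_pos q1). pose proof (Rabs_pos p2). pose proof (Rabs_pos q2).
  assert (K1 : 1 <= K) by (unfold K; lra).
  assert (bx1 : Rabs x1 <= K) by (apply abs_le_diff in Hx1; unfold K; lra).
  assert (by1 : Rabs y1 <= K) by (apply abs_le_diff in Hy1; unfold K; lra).
  assert (bq1 : Rabs q1 <= K) by (unfold K; lra).
  assert (bs2 : Rabs s2 <= K) by (apply abs_le_diff in Hs2; unfold K; lra).
  assert (bt2 : Rabs t2 <= K) by (apply abs_le_diff in Ht2; unfold K; lra).
  assert (bx1' : Rabs (cr + ci*ph) <= 2).
  { eapply Rle_trans. apply Rabs_triang. assert (Rabs (ci*ph) <= 1*1) by (apply abs_mul_le; lra). lra. }
  assert (by1' : Rabs (cr*ph - ci) <= 2).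
  { unfold Rminus. eapply Rle_trans. apply Rabs_triang. rewrite Rabs_Ropp.
    assert (Rabs (cr*ph) <= 1*1) by (apply abs_mul_le; lra). lra. }
  assert (dy : Rabs (y1 - t1) <= 2*eta) by (apply abs_diff2 with q1; auto).
  assert (dx : Rabs (x1 - s1) <= 2*eta) by (apply abs_diff2 with p1; auto).
  assert (KK : K <= K^3) by nra.
  assert (KK2 : K^2 <= K^3) by nra.
  assert (T1 : Rabs ((cr + ci*ph)*(y1-t1)) <= 2*(2*eta)) by (apply abs_mul_le; auto).
  assert (T2 : Rabs ((6*y1^2*(cr*ph - ci))*(x1-s1)) <= (6*K^2*2)*(2*eta)).
  { apply abs_mul_le; auto. apply abs_mul_le; auto. rewrite Rabs_mult, <- RPow_abs, Rabs_right by lra.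
    apply Rmult_le_compat_l; [lra|]. apply pow_incr. split; auto using Rabs_pos. }
  assert (T3 : Rabs ((x1-p1)*ci) <= eta*1) by (apply abs_mul_le; auto).
  assert (T4 : Rabs ((y1-q1)*(2*cr*(y1^2 + y1*q1 + q1^2))) <= eta*(2*1*(3*K^2))).
  { apply abs_mul_le; auto. apply abs_mul_le; [apply abs_mul_le; [rewrite Rabs_right;lra|auto]|].
    eapply Rle_trans. apply Rabs_triang. eapply Rle_trans. apply Rplus_le_compat_r. apply Rabs_triang.
    assert (Rabs (y1^2) <= K^2) by (rewrite <- RPow_abs; apply pow_incr; split; auto using Rabs_pos).
    assert (Rabs (q1^2) <= K^2) by (rewrite <- RPow_abs; apply pow_incr; split; auto using Rabs_pos).
    assert (Rabs (y1*q1) <= K*K) by (apply abs_mul_le; auto). lra. }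
  assert (T5 : Rabs ((s2-p2)*di) <= eta*1) by (apply abs_mul_le; auto).
  assert (T6 : Rabs ((t2-q2)*dr) <= eta*1) by (apply abs_mul_le; auto).
  assert (T8 : Rabs (ph * (x1*cr - 2*y1^3*ci + s2*dr - t2*di)) <= eps * (5*K^3)).
  { apply abs_mul_le; auto.
    assert (Rabs (x1*cr) <= K*1) by (apply abs_mul_le; auto).
    assert (Rabs (2*y1^3*ci) <= (2*K^3)*1).
    { apply abs_mul_le; auto. rewrite Rabs_mult, <- RPow_abs, Rabs_right by lra.
      apply Rmult_le_compat_l; [lra|]. apply pow_incr. split; auto using Rabs_pos. }
    assert (Rabs (s2*dr) <= K*1) by (apply abs_mul_le; auto).
    assert (Rabs (t2*di) <= K*1) by (apply abs_mul_le; auto).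
    unfold Rminus. tri. rewrite !Rabs_Ropp in *. lra. }
  replace (Dform x1 y1 x2 y2 s1 t1 s2 t2 cr ci dr di ph - (- p1*ci - 2*q1^3*cr - p2*di - q2*dr))
    with ((cr + ci*ph)*(y1-t1) + - ((6*y1^2*(cr*ph - ci))*(x1-s1)) + - ((x1-p1)*ci)
          + - ((y1-q1)*(2*cr*(y1^2 + y1*q1 + q1^2))) + - ((s2-p2)*di) + - ((t2-q2)*dr)
          + ph * (x1*cr - 2*y1^3*ci + s2*dr - t2*di)) by (unfold Dform; ring).
  tri. rewrite !Rabs_Ropp in *.
  pose proof (Rabs_pos ph). nra.
Qed.
Lemma deriv_snd (g : R -> R) u2 P1 Q1 P2 Q2 cr ci dr di s1 t1 s2 t2 :
  ex_derive g u2 ->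
  is_derive (fun t => Dsnd (P1 + cr*t + ci*g t) (Q1 + cr*g t - ci*t) (P2 + dr*t + di*g t)
                           (Q2 + dr*g t - di*t) s1 t1 s2 t2) u2
   (Dform (P1 + cr*u2 + ci*g u2) (Q1 + cr*g u2 - ci*u2) (P2 + dr*u2 + di*g u2)
          (Q2 + dr*g u2 - di*u2) s1 t1 s2 t2 cr ci dr di (Derive g u2)).
Proof.
  intros Hg. unfold Dsnd, Dform. auto_derive; [repeat split; exact Hg | change (Derive (fun x : R => g x) u2) with (Derive g u2); ring].
Qed.
Lemma deriv_fst (g : R -> R) u2 P1 Q1 P2 Q2 cr ci dr di s1 t1 s2 t2 :
  ex_derive g u2 ->
  ex_derive (fun t => Dfst (P1 + cr*t + ci*g t) (Q1 + cr*g t - ci*t) (P2 + dr*t + di*g t)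
                           (Q2 + dr*g t - di*t) s1 t1 s2 t2) u2.
Proof.
  intros Hg. unfold Dfst. auto_derive. repeat split; exact Hg.
Qed.
Lemma lin4 a1 a2 a3 a4 X1 X2 X3 X4 D :
  Rabs a1 <= 1 -> Rabs a2 <= 1 -> Rabs a3 <= 1 -> Rabs a4 <= 1 ->
  Rabs X1 <= D -> Rabs X2 <= D -> Rabs X3 <= D -> Rabs X4 <= D ->
  Rabs (a1*X1 + a2*X2 + a3*X3 + a4*X4) <= 4*D.
Proof.
  intros.
  assert (Rabs (a1*X1) <= 1*D) by (apply abs_mul_le; auto).
  assert (Rabs (a2*X2) <= 1*D) by (apply abs_mul_le; auto).
  assert (Rabs (a3*X3) <= 1*D) by (apply abs_mul_le; auto).
  assert (Rabs (a4*X4) <= 1*D) by (apply abs_mul_le; auto).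
  pose proof (Rabs_triang (a1*X1 + a2*X2 + a3*X3) (a4*X4)).
  pose proof (Rabs_triang (a1*X1 + a2*X2) (a3*X3)).
  pose proof (Rabs_triang (a1*X1) (a2*X2)). lra.
Qed.

Lemma sq_abs1 x : x^2 <= 1 -> Rabs x <= 1.
Proof. intros. destruct (Rle_dec (Rabs x) 1); auto. rewrite <- pow2_abs in H. nra. Qed.

Lemma param_bound ar ai br bi cr ci dr di u1 v1 u2 ph D :
  ar^2+ai^2+(br^2+bi^2) = 1 -> cr^2+ci^2+(dr^2+di^2) = 1 ->
  ar * cr - ai * - ci + (br * dr - bi * - di) = 0 ->
  ar * - ci + ai * cr + (br * - di + bi * dr) = 0 ->
  Rabs (ar*u1 + ai*v1 + cr*u2 + ci*ph) <= D -> Rabs (ar*v1 - ai*u1 + cr*ph - ci*u2) <= D ->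
  Rabs (br*u1 + bi*v1 + dr*u2 + di*ph) <= D -> Rabs (br*v1 - bi*u1 + dr*ph - di*u2) <= D ->
  Rabs u1 <= 4*D /\ Rabs v1 <= 4*D /\ Rabs u2 <= 4*D.
Proof.
  intros Hab Hcd Hg1 Hg2 B1 B2 B3 B4.
  assert (ar^2 <= 1) by nra. assert (ai^2 <= 1) by nra. assert (br^2 <= 1) by nra. assert (bi^2 <= 1) by nra.
  assert (cr^2 <= 1) by nra. assert (ci^2 <= 1) by nra. assert (dr^2 <= 1) by nra. assert (di^2 <= 1) by nra.
  assert (Rabs (-ai) <= 1) by (rewrite Rabs_Ropp; apply sq_abs1; auto).
  assert (Rabs (-bi) <= 1) by (rewrite Rabs_Ropp; apply sq_abs1; auto).
  assert (Rabs (-ci) <= 1) by (rewrite Rabs_Ropp; apply sq_abs1; auto).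
  assert (Rabs (-di) <= 1) by (rewrite Rabs_Ropp; apply sq_abs1; auto).
  set (gr := ar*cr + ai*ci + br*dr + bi*di).
  set (gi := ai*cr - ar*ci + bi*dr - br*di).
  assert (Egr : gr = 0) by (unfold gr; lra).
  assert (Egi : gi = 0) by (unfold gi; lra).
  split; [|split].
  - replace u1 with (ar*(ar*u1 + ai*v1 + cr*u2 + ci*ph) + (-ai)*(ar*v1 - ai*u1 + cr*ph - ci*u2)
       + br*(br*u1 + bi*v1 + dr*u2 + di*ph) + (-bi)*(br*v1 - bi*u1 + dr*ph - di*u2)).
    apply lin4; auto using sq_abs1.
    transitivity ((ar^2+ai^2+(br^2+bi^2))*u1 + gr*u2 - gi*ph); [unfold gr, gi; ring|].
    rewrite Hab, Egr, Egi. ring.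
  - replace v1 with (ar*(ar*v1 - ai*u1 + cr*ph - ci*u2) + ai*(ar*u1 + ai*v1 + cr*u2 + ci*ph)
       + br*(br*v1 - bi*u1 + dr*ph - di*u2) + bi*(br*u1 + bi*v1 + dr*u2 + di*ph)).
    apply lin4; auto using sq_abs1.
    transitivity ((ar^2+ai^2+(br^2+bi^2))*v1 + gr*ph + gi*u2); [unfold gr, gi; ring|].
    rewrite Hab, Egr, Egi. ring.
  - replace u2 with (cr*(ar*u1 + ai*v1 + cr*u2 + ci*ph) + (-ci)*(ar*v1 - ai*u1 + cr*ph - ci*u2)
       + dr*(br*u1 + bi*v1 + dr*u2 + di*ph) + (-di)*(br*v1 - bi*u1 + dr*ph - di*u2)).
    apply lin4; auto using sq_abs1.
    transitivity (gr*u1 + gi*v1 + (cr^2+ci^2+(dr^2+di^2))*u2); [unfold gr, gi; ring|].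
    rewrite Hcd, Egr, Egi. ring.
Qed.

Lemma origin_not_bD : ~ bD ((0,0),(0,0)).
Proof.
  intro H. destruct (H (1/2) ltac:(lra)) as [_ [p [Hp Hn]]].
  destruct (C2dist_comp p ((0,0),(0,0))) as (h1&h2&h3&h4). simpl in h1, h2, h3, h4.
  rewrite !Rminus_0_r in h1, h2, h3, h4.
  apply Hn. unfold inD. rewrite rho_eq.
  assert (Rabs (fst (fst p)) < 1/2) as a1 by (eapply Rle_lt_trans; [exact h1| exact Hp]).
  assert (Rabs (snd (fst p)) < 1/2) as a2 by (eapply Rle_lt_trans; [exact h2| exact Hp]).
  assert (Rabs (fst (snd p)) < 1/2) as a3 by (eapply Rle_lt_trans; [exact h3| exact Hp]).
  assert (Rabs (snd (snd p)) < 1/2) as a4 by (eapply Rle_lt_trans; [exact h4| exact Hp]).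
  apply Rabs_def2 in a1, a2, a3, a4.
  set (x1 := fst (fst p)) in *. set (y1 := snd (fst p)) in *. set (x2 := fst (snd p)) in *. set (y2 := snd (snd p)) in *.
  assert (y1^2 < 1/4) by nra. assert (y1^4 = y1^2*y1^2) by ring. nra.
Qed.

Lemma pdy2_new p1 q1 p2 q2 ar ai br bi cr ci dr di :
  pd_y2 (fun w' => rho (to_orig ((p1,q1),(p2,q2)) (ar,ai) (br,bi) (cr,ci) (dr,di) w')) (RtoC 0, RtoC 0)
  = 2*p1*ci + 4*q1^3*cr + 2*p2*di + 2*q2*dr.
Proof.
  unfold pd_y2. apply is_derive_unique. simpl.
  apply (is_derive_ext (fun t => (p2 + di*t)^2 + (q2+dr*t)^2 + (p1+ci*t)^2 + (q1+cr*t)^4 - 1)).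
  { intro t. rewrite rho_eq. simpl. ring. }
  auto_derive; auto. ring.
Qed.

Lemma gradnorm_rho w : gradnorm rho w =
  sqrt ((2 * fst (fst w))^2 + (4 * snd (fst w) ^ 3)^2 + (2 * fst (snd w))^2 + (2 * snd (snd w))^2).
Proof. unfold gradnorm. rewrite pdx1_rho, pdy1_rho, pdx2_rho, pdy2_rho. reflexivity. Qed.

Lemma Eabs x y B : x = y -> Rabs x <= B -> Rabs y <= B.
Proof. intros; subst; auto. Qed.

Lemma sq_le x B : Rabs x <= B -> x^2 <= B^2.
Proof. intros. rewrite <- pow2_abs. apply pow_incr. split; auto using Rabs_pos. Qed.

Theorem lemma2p2 :
  forall (zeta : C2), bD zeta ->
  forall (a b c d : C), is_unitary a b c d ->
  (* coordinate normalisation: rho in the new coordinates w' *)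
  pd_x1 (fun w' => rho (to_orig zeta a b c d w')) (RtoC 0, RtoC 0) = 0 ->
  pd_y1 (fun w' => rho (to_orig zeta a b c d w')) (RtoC 0, RtoC 0) = 0 ->
  pd_x2 (fun w' => rho (to_orig zeta a b c d w')) (RtoC 0, RtoC 0) = 0 ->
  pd_y2 (fun w' => rho (to_orig zeta a b c d w')) (RtoC 0, RtoC 0) = gradnorm rho zeta ->
  forall (Phi : R -> R -> R -> R) (r : R), 0 < r ->
  (* near zeta, bD is the graph v2 = Phi(u1, v1, u2) *)
  (forall w' : C2, C2norm w' < r ->
     (bD (to_orig zeta a b c d w') <->
      snd (snd w') = Phi (fst (fst w')) (snd (fst w')) (fst (snd w')))) ->
  smooth_on (ball3 r) Phi ->
  Phi 0 0 0 = 0 ->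
  pd1 Phi 0 0 0 = 0 -> pd2 Phi 0 0 0 = 0 -> pd3 Phi 0 0 0 = 0 ->
  exists delta : R, 0 < delta /\
    forall (u1 v1 u2 : R) (z : C2),
      let w := to_orig zeta a b c d (graph_pt Phi u1 v1 u2) in
      bD w -> C2dist w zeta < delta -> C2dist z zeta < delta ->
      let f := fun t : R => DeltaD (to_orig zeta a b c d (graph_pt Phi u1 v1 t)) z in
      ex_derive (fun t => fst (f t)) u2 /\ ex_derive (fun t => snd (f t)) u2 /\
      (Derive (fun t => fst (f t)) u2, Derive (fun t => snd (f t)) u2) <> (0, 0).
Proof.
  intros zeta HbD a b c d Hu _ _ _ H4 Phi r Hr _ Hsm _ _ _ Hp3.
  destruct zeta as [[p1 q1] [p2 q2]]. destruct a as [ar ai], b as [br bi], c as [cr ci], d as [dr di].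
  destruct Hu as (Hab & Hcd & Hg). rewrite !Cmod2 in Hab, Hcd. simpl in Hab, Hcd.
  unfold Cplus, Cmult, Cconj, RtoC in Hg. simpl in Hg. injection Hg as Hg1 Hg2.
  rewrite pdy2_new in H4.
  set (N := gradnorm rho ((p1,q1),(p2,q2))) in H4.
  assert (H4' : 2 * p1 * ci + 4 * q1 ^ 3 * cr + 2 * p2 * di + 2 * q2 * dr = N) by exact H4.
  clear H4.
  assert (HN : 0 < N).
  { assert (0 <= N) by (unfold N; rewrite gradnorm_rho; apply sqrt_pos).
    destruct (Rle_lt_or_eq_dec 0 N H) as [?|HN0]; auto. exfalso.
    unfold N in HN0. rewrite gradnorm_rho in HN0. simpl in HN0.
    symmetry in HN0. apply sqrt_eq_0 in HN0; [|nra].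
    assert (p1 = 0) by nra. assert (p2 = 0) by nra. assert (q2 = 0) by nra.
    assert (q1^3 = 0) by nra. assert (q1 = 0) by (destruct (Req_dec q1 0); auto; exfalso; apply (pow_nonzero q1 3); auto). subst.
    apply origin_not_bD; exact HbD. }
  set (K := 1 + Rabs p1 + Rabs q1 + Rabs p2 + Rabs q2).
  assert (HK : 1 <= K) by (unfold K; pose proof (Rabs_pos p1); pose proof (Rabs_pos q1);
    pose proof (Rabs_pos p2); pose proof (Rabs_pos q2); lra).
  assert (HK3 : 0 < K^3) by (apply pow_lt; lra).
  set (eta0 := Rmin 1 (N / (200 * K^3))).
  assert (Heta0 : 0 < eta0) by (apply Rmin_pos; [lra | apply Rdiv_lt_0_compat; lra]).
  assert (Heta1 : eta0 <= 1) by apply Rmin_l.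
  assert (Heta2 : K^3 * eta0 <= N / 200).
  { assert (eta0 <= N / (200 * K^3)) by apply Rmin_r.
    assert (K^3 * (N / (200*K^3)) = N/200) by (field; lra).
    assert (K^3 * eta0 <= K^3 * (N / (200*K^3))) by (apply Rmult_le_compat_l; lra). lra. }
  pose proof (Hsm 1%nat) as Hs1. cbn [Ck] in Hs1.
  destruct Hs1 as [_ [Hder [_ [_ [Hc3 _]]]]].
  assert (Hb0 : ball3 r 0 0 0).
  { unfold ball3. replace (0^2+0^2+0^2) with 0 by ring. rewrite sqrt_0. lra. }
  destruct (Hc3 0 0 0 Hb0 eta0 Heta0) as [dph [Hdph Hcont]].
  set (delta := Rmin eta0 (Rmin (dph/5) (r/8))).
  assert (Hd1 : delta <= eta0) by apply Rmin_l.
  assert (Hd2 : delta <= dph/5) by (eapply Rle_trans; [apply Rmin_r | apply Rmin_l]).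
  assert (Hd3 : delta <= r/8) by (eapply Rle_trans; [apply Rmin_r | apply Rmin_r]).
  assert (Hd0 : 0 < delta) by (apply Rmin_pos; [lra | apply Rmin_pos; lra]).
  exists delta. split; [exact Hd0|].
  intros u1 v1 u2 z. cbv zeta. unfold graph_pt. intros _ Hdw Hdz.
  destruct z as [[s1 t1] [s2 t2]].
  assert (Hab' : ar^2+ai^2+(br^2+bi^2) = 1) by (rewrite <- Hab; ring).
  assert (Hcd' : cr^2+ci^2+(dr^2+di^2) = 1) by (rewrite <- Hcd; ring).
  set (ph := Phi u1 v1 u2) in *.
  set (W := to_orig (p1, q1, (p2, q2)) (ar, ai) (br, bi) (cr, ci) (dr, di) (u1, v1, (u2, ph))) in *.
  destruct (C2dist_comp W (p1, q1, (p2, q2))) as (b1&b2&b3&b4).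
  apply (Eabs _ (ar*u1 + ai*v1 + cr*u2 + ci*ph)) in b1; [|unfold W; simpl; ring].
  apply (Eabs _ (ar*v1 - ai*u1 + cr*ph - ci*u2)) in b2; [|unfold W; simpl; ring].
  apply (Eabs _ (br*u1 + bi*v1 + dr*u2 + di*ph)) in b3; [|unfold W; simpl; ring].
  apply (Eabs _ (br*v1 - bi*u1 + dr*ph - di*u2)) in b4; [|unfold W; simpl; ring].
  destruct (param_bound ar ai br bi cr ci dr di u1 v1 u2 ph _ Hab' Hcd' Hg1 Hg2 b1 b2 b3 b4) as (c1&c2&c3).
  destruct (C2dist_comp (s1, t1, (s2, t2)) (p1, q1, (p2, q2))) as (z1&z2&z3&z4).
  simpl fst in z1, z2, z3, z4. simpl snd in z1, z2, z3, z4.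
  set (dw := C2dist W (p1, q1, (p2, q2))) in *.
  assert (Hdw' : dw < delta) by exact Hdw.
  set (dz := C2dist (s1, t1, (s2, t2)) (p1, q1, (p2, q2))) in *.
  assert (Hdz' : dz < delta) by exact Hdz.
  assert (Hball : ball3 r u1 v1 u2).
  { unfold ball3. apply Rle_lt_trans with (sqrt ((7*delta)^2)).
    - apply sqrt_le_1_alt. apply sq_le in c1. apply sq_le in c2. apply sq_le in c3.
      assert (0 <= dw) by (eapply Rle_trans; [apply Rabs_pos | exact b1]).
      assert ((4*dw)^2 <= (4*delta)^2) by (apply pow_incr; lra). nra.
    - rewrite sqrt_pow2 by lra. lra. }
  destruct (Hder u1 v1 u2 Hball) as (_&_&Hdg).
  assert (Hphi : Rabs (Derive (fun t => Phi u1 v1 t) u2) < eta0).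
  { pose proof (Hcont u1 v1 u2) as HH. rewrite Hp3, !Rminus_0_r in HH. apply HH; lra. }
  set (P1 := p1 + ar*u1 + ai*v1). set (Q1 := q1 + ar*v1 - ai*u1).
  set (P2 := p2 + br*u1 + bi*v1). set (Q2 := q2 + br*v1 - bi*u1).
  assert (Hsnd : forall t, Dsnd (P1 + cr*t + ci*Phi u1 v1 t) (Q1 + cr*Phi u1 v1 t - ci*t)
      (P2 + dr*t + di*Phi u1 v1 t) (Q2 + dr*Phi u1 v1 t - di*t) s1 t1 s2 t2 =
      snd (DeltaD (to_orig (p1, q1, (p2, q2)) (ar, ai) (br, bi) (cr, ci) (dr, di) (u1, v1, (t, Phi u1 v1 t))) (s1, t1, (s2, t2)))).
  { intro t. rewrite DeltaD_snd.
    destruct (to_orig_comp (p1, q1, (p2, q2)) ar ai br bi cr ci dr di u1 v1 t (Phi u1 v1 t)) as (f1&f2&f3&f4).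
    rewrite f1, f2, f3, f4. simpl. unfold P1, Q1, P2, Q2. f_equal; ring. }
  assert (Hfst : forall t, Dfst (P1 + cr*t + ci*Phi u1 v1 t) (Q1 + cr*Phi u1 v1 t - ci*t)
      (P2 + dr*t + di*Phi u1 v1 t) (Q2 + dr*Phi u1 v1 t - di*t) s1 t1 s2 t2 =
      fst (DeltaD (to_orig (p1, q1, (p2, q2)) (ar, ai) (br, bi) (cr, ci) (dr, di) (u1, v1, (t, Phi u1 v1 t))) (s1, t1, (s2, t2)))).
  { intro t. rewrite DeltaD_fst.
    destruct (to_orig_comp (p1, q1, (p2, q2)) ar ai br bi cr ci dr di u1 v1 t (Phi u1 v1 t)) as (f1&f2&f3&f4).
    rewrite f1, f2, f3, f4. simpl. unfold P1, Q1, P2, Q2. f_equal; ring. }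
  pose proof (deriv_snd (fun t => Phi u1 v1 t) u2 P1 Q1 P2 Q2 cr ci dr di s1 t1 s2 t2 Hdg) as Hds.
  apply (is_derive_ext _ _ _ _ Hsnd) in Hds.
  pose proof (deriv_fst (fun t => Phi u1 v1 t) u2 P1 Q1 P2 Q2 cr ci dr di s1 t1 s2 t2 Hdg) as Hdf.
  apply (ex_derive_ext _ _ _ Hfst) in Hdf.
  split; [exact Hdf|]. split; [eexists; exact Hds|].
  intro Heq. injection Heq as _ Heq.
  pose proof (is_derive_unique _ _ _ Hds) as Hv.
  match type of Hv with _ = ?V => assert (HV0 : V = 0) by (rewrite <- Hv; exact Heq) end.
  clear Heq Hv Hds Hdf Hsnd Hfst.
  cbv beta in HV0. fold ph in HV0.
  set (phd := Derive (fun t : R => Phi u1 v1 t) u2) in *.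
  assert (Hcr : Rabs cr <= 1) by (apply sq_abs1; nra).
  assert (Hci : Rabs ci <= 1) by (apply sq_abs1; nra).
  assert (Hdr : Rabs dr <= 1) by (apply sq_abs1; nra).
  assert (Hdi : Rabs di <= 1) by (apply sq_abs1; nra).
  assert (kb := key_bound (P1 + cr * u2 + ci * ph) (Q1 + cr * ph - ci * u2)
      (P2 + dr * u2 + di * ph) (Q2 + dr * ph - di * u2) s1 t1 s2 t2 p1 q1 p2 q2 cr ci dr di phd delta eta0).
  cbv zeta in kb. fold K in kb. rewrite HV0 in kb.
  assert (HD0 : - p1 * ci - 2 * q1 ^ 3 * cr - p2 * di - q2 * dr = - N / 2) by lra.
  rewrite HD0 in kb.
  assert (Hfin : Rabs (0 - - N / 2) <= 37 * K ^ 3 * (delta + eta0)).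
  { apply kb; try lra.
    - apply (Eabs (ar*u1 + ai*v1 + cr*u2 + ci*ph)); [unfold P1; ring|].
      apply (Rle_trans _ dw); [exact b1 | apply Rlt_le; exact Hdw'].
    - apply (Eabs (ar*v1 - ai*u1 + cr*ph - ci*u2)); [unfold Q1; ring|].
      apply (Rle_trans _ dw); [exact b2 | apply Rlt_le; exact Hdw']. }
  pose proof (Rle_abs (0 - - N / 2)).
  assert (37 * K^3 * (delta + eta0) <= 74 * (K^3 * eta0)).
  { assert (K^3 * delta <= K^3 * eta0) by (apply Rmult_le_compat_l; lra). nra. }
  lra.
Qed.
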